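(* Let $n, r, d$ be positive integers with $n\geqslant r+1$. Then $m_e(K_n^d, r)=\binom{d+r}{d+1}$.
   Context: All graphs are finite, simple and undirected. Given graphs $G$ and $H$, the $H$-bootstrap percolation process on $G$ starts with a set $E_0\subseteq E(G)$ of initially activated edges, and for $i\geqslant1$, $E_i$ consists of $E_{i-1}$ together with all edges $e\in E(G)$ for which there is a subgraph $H_e$ of $G$ isomorphic to $H$ with $e\in E(H_e)$ and $E(H_e)\setminus\{e\}\subseteq E_{i-1}$. $E_0$ is a percolating set if $\bigcup_{i\geqslant0}E_i=E(G)$. The weak saturation number $\mathrm{wsat}(G,H)$ is the minimum size of a percolating set. Define $m_e(G,r)=\mathrm{wsat}(G,S_{r+1})$, where $S_{r+1}$ is the star graph on $r+2$ vertices (one center and $r+1$ leaves). $K_n$ is the complete graph with vertex set $\{0,\ldots,n-1\}$ and $K_n^d$ is the Cartesian product of $d$ copies of $K_n$: vertex set $\{0,\ldots,n-1\}^d$, two vertices adjacent iff they differ in exactly one coordinate. *)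

(* Defs.v *)
From mathcomp Require Import all_boot.
Set Implicit Arguments. Unset Strict Implicit. Unset Printing Implicit Defensive.

(* A simple graph is given by a finite vertex type V and an adjacency relation
   adj : rel V (assumed symmetric and irreflexive where relevant). *)
Definition edges (V : finType) (adj : rel V) : {set {set V}} :=
  [set [set p.1; p.2] | p : V * V & adj p.1 p.2].

(* One round of the H-bootstrap percolation process on G:
   E_i = E_{i-1} together with every edge e of G for which there is a subgraph
   H_e of G isomorphic to H (an injective homomorphic image f(H)) with
   e in E(H_e) and E(H_e) \ {e} contained in E_{i-1}. *)
Definition bp_step (VG : finType) (adjG : rel VG) (VH : finType) (adjH : rel VH)
  (A : {set {set VG}}) : {set {set VG}} :=
  A :|: [set e in edges adjG |
    [exists f : {ffun VH -> VG},
      [&& injectiveb f,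
          [forall a, forall b, adjH a b ==> adjG (f a) (f b)] &
          [exists a, exists b,
             [&& adjH a b, e == [set f a; f b] &
                 [forall a', forall b', adjH a' b' ==>
                    ([set f a'; f b'] == e) || ([set f a'; f b'] \in A)]]]]]].

Definition percolating (VG : finType) (adjG : rel VG) (VH : finType) (adjH : rel VH)
  (E0 : {set {set VG}}) : Prop :=
  E0 \subset edges adjG /\
  exists k : nat, iter k (bp_step adjG adjH) E0 = edges adjG.

Definition is_wsat (VG : finType) (adjG : rel VG) (VH : finType) (adjH : rel VH)
  (m : nat) : Prop :=
  (exists E0, percolating adjG adjH E0 /\ #|E0| = m) /\
  (forall E0, percolating adjG adjH E0 -> m <= #|E0|).

(* The star S_{r+1}: center 0 and r+1 leaves 1..r+1, on vertex set 'I_(r+2). *)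
Definition star_adj (r : nat) : rel 'I_(r.+2) :=
  fun i j => (val i == 0) != (val j == 0).

Definition is_me (VG : finType) (adjG : rel VG) (r : nat) (m : nat) : Prop :=
  is_wsat adjG (@star_adj r) m.

Definition hamming_adj (n d : nat) : rel {ffun 'I_d -> 'I_n} :=
  fun x y => #|[set i | x i != y i]| == 1.

(* Main.v *)
Require Import Defs.
From mathcomp Require Import all_boot all_algebra fingroup perm zify.
Set Implicit Arguments. Unset Strict Implicit. Unset Printing Implicit Defensive.

Section Graph.
Variables n d : nat.
Local Notation V := {ffun 'I_d -> 'I_n}.
Local Notation adj := (@hamming_adj n d).

Lemma adjC (x y : V) : adj x y = adj y x.
Proof.
rewrite /hamming_adj.
have -> : [set i | y i != x i] = [set i | x i != y i].
  by apply/setP => i; rewrite !inE eq_sym.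
by [].
Qed.

Lemma adj_irr (x : V) : adj x x = false.
Proof.
rewrite /hamming_adj.
have -> : [set i | x i != x i] = set0 by apply/setP => i; rewrite !inE eqxx.
by rewrite cards0.
Qed.

Lemma adjP (x y : V) :
  reflect (exists i, x i != y i /\ forall j, j != i -> x j = y j) (adj x y).
Proof.
apply: (iffP idP).
  move/cards1P => [i Hi]; exists i; split.
    have : i \in [set i | x i != y i] by rewrite Hi set11.
    by rewrite inE.
  move=> j ji; apply/eqP; apply: contraR ji => H.
  have : j \in [set i | x i != y i] by rewrite inE.
  by rewrite Hi inE.
move=> [i [Hi Hj]]; apply/cards1P; exists i; apply/setP => j; rewrite !inE.
case: (eqVneq j i) => [->|ji]; first by rewrite Hi.
by rewrite Hj // eqxx.
Qed.

Definition upd (x : V) (i : 'I_d) (s : 'I_n) : V :=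
  [ffun j => if j == i then s else x j].

Lemma upd_same (x : V) i s : upd x i s i = s.
Proof. by rewrite ffunE eqxx. Qed.

Lemma upd_other (x : V) i s j : j != i -> upd x i s j = x j.
Proof. by rewrite ffunE => /negbTE ->. Qed.

Lemma adj_upd (x : V) i s : adj x (upd x i s) = (s != x i).
Proof.
apply/idP/idP.
  move/adjP => [j [Hj Hk]]; apply/eqP => sx; move: Hj.
  case: (eqVneq j i) => [->|ji]; first by rewrite upd_same sx eqxx.
  by rewrite upd_other // eqxx.
move=> sx; apply/adjP; exists i; split; first by rewrite upd_same eq_sym.
by move=> j ji; rewrite upd_other.
Qed.

Lemma adj_updE (x y : V) : adj x y -> exists i, y i != x i /\ y = upd x i (y i).
Proof.
move/adjP => [i [Hi Hj]]; exists i; split; first by rewrite eq_sym.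
apply/ffunP => j; rewrite ffunE; case: (eqVneq j i) => [->//|ji].
by rewrite Hj.
Qed.

Lemma upd_upd (x : V) i s t : upd (upd x i s) i t = upd x i t.
Proof. by apply/ffunP => j; rewrite !ffunE; case: (j == i). Qed.

Lemma upd_id (x : V) i : upd x i (x i) = x.
Proof. by apply/ffunP => j; rewrite !ffunE; case: eqP => [->|]. Qed.

Lemma upd_inj (x : V) i s j t : s != x i -> t != x j -> upd x i s = upd x j t -> i = j /\ s = t.
Proof.
move=> si tj E.
have ij : i = j.
  apply/eqP; apply: contraTT si => ij.
  by rewrite -[s](upd_same x i s) E upd_other // negbK.
subst j; split => //.
by rewrite -[s](upd_same x i s) E upd_same.
Qed.

Lemma set2_eq (T : finType) (x y p q : T) :
  [set x; y] = [set p; q] -> (x = p /\ y = q) \/ (x = q /\ y = p).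
Proof.
move=> E.
have hx : x \in [set p; q] by rewrite -E set21.
have hy : y \in [set p; q] by rewrite -E set22.
have hp : p \in [set x; y] by rewrite E set21.
have hq : q \in [set x; y] by rewrite E set22.
move: hx hy hp hq; rewrite !inE.
case/orP => /eqP hx; case/orP => /eqP hy; subst => //; try by left.
- by move=> _ /orP [] /eqP ->; left.
- by right.
- by move=> /orP [] /eqP -> _; right.
Qed.

End Graph.

Lemma star_cases r (a b : 'I_(r.+2)) : star_adj a b ->
  (nat_of_ord a = 0 /\ nat_of_ord b != 0) \/ (nat_of_ord b = 0 /\ nat_of_ord a != 0).
Proof.
rewrite /star_adj /=.
by case: (eqVneq (nat_of_ord a) 0) => a0; case: (eqVneq (nat_of_ord b) 0) => b0 //= _; auto.
Qed.

Section Step.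
Variables n d r : nat.
Local Notation V := {ffun 'I_d -> 'I_n}.
Local Notation adj := (@hamming_adj n d).
Local Notation step := (bp_step (@hamming_adj n d) (@star_adj r)).
Local Notation E := (edges (@hamming_adj n d)).

Definition newp (A : {set {set V}}) (e : {set V}) : bool :=
    [exists f : {ffun 'I_(r.+2) -> V},
      [&& injectiveb f,
          [forall a, forall b, star_adj a b ==> adj (f a) (f b)] &
          [exists a, exists b,
             [&& star_adj a b, e == [set f a; f b] &
                 [forall a', forall b', star_adj a' b' ==>
                    ([set f a'; f b'] == e) || ([set f a'; f b'] \in A)]]]]].

Lemma stepE (A : {set {set V}}) e : (e \in step A) = (e \in A) || ((e \in E) && newp A e).
Proof. by rewrite /bp_step in_setU inE. Qed.

Lemma stepP1 (A : {set {set V}}) e : e \in step A -> (e \in A) \/ ((e \in E) /\ newp A e).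
Proof. by rewrite stepE => /orP [->|/andP [-> ->]]; [left|right]. Qed.

Lemma stepI1 (A : {set {set V}}) e : e \in A -> e \in step A.
Proof. by rewrite stepE => ->. Qed.

Lemma stepI2 (A : {set {set V}}) e : e \in E -> newp A e -> e \in step A.
Proof. by rewrite stepE => -> ->; rewrite orbT. Qed.

Lemma edgeE (x y : V) : adj x y -> [set x; y] \in E.
Proof. by move=> H; apply/imsetP; exists (x, y); rewrite ?inE. Qed.

Lemma edgeP e : e \in E -> exists x y, adj x y /\ e = [set x; y].
Proof. by case/imsetP => [[x y]]; rewrite inE /= => H ->; exists x, y. Qed.

Lemma step_sound (A : {set {set V}}) e : e \in step A ->
  e \in A \/ exists c w, [/\ adj c w, e = [set c; w] &
     r <= #|[set u | adj c u & (u != w) && ([set c; u] \in A)]|].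
Proof.
case/stepP1 => [eA|[eE H]]; [by left|right].
move: H => /existsP [f /and3P [/injectiveP finj /forallP fhom
  /existsP [a /existsP [b /and3P [ab /eqP ee /forallP fall]]]]].
have key : forall c0 l : 'I_(r.+2), nat_of_ord c0 = 0 -> nat_of_ord l != 0 ->
    e = [set f c0; f l] -> exists c w, [/\ adj c w, e = [set c; w] &
     r <= #|[set u | adj c u & (u != w) && ([set c; u] \in A)]|].
  move=> c0 l c00 l0 el; exists (f c0), (f l).
  have sc0 : forall j, nat_of_ord j != 0 -> star_adj c0 j.
    by move=> j j0; rewrite /star_adj /= c00 eqxx (negbTE j0).
  have c0l : c0 != l by apply: contra l0 => /eqP <-; rewrite c00.
  split => //; first by have := fhom c0 => /forallP /(_ l) /implyP; apply; apply: sc0.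
  set J := [set j : 'I_(r.+2) | (nat_of_ord j != 0) && (j != l)].
  have cJ : #|J| = r.
    have -> : J = ~: [set c0; l].
      apply/setP => j; rewrite !inE negb_or; congr (_ && _).
      by rewrite -(inj_eq val_inj) /= c00.
    by have := cardsC [set c0; l]; rewrite cards2 c0l card_ord; lia.
  apply: (@leq_trans #|f @: J|).
    by rewrite card_in_imset ?cJ // => x y _ _; apply: finj.
  apply: subset_leq_card; apply/subsetP => u /imsetP [j jJ ->]; move: jJ; rewrite /J inE => /andP [j0 jl].
  rewrite inE; apply/and3P; split.
  - by have := fhom c0 => /forallP /(_ j) /implyP; apply; apply: sc0.
  - by apply: contra jl => /eqP /finj ->.
  - have := fall c0 => /forallP /(_ j) /implyP /(_ (sc0 _ j0)) /orP [/eqP|//].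
    rewrite el => /set2_eq [[_ /finj fl]|[/finj fl _]].
      by rewrite fl eqxx in jl.
    by rewrite fl eqxx in c0l.
move: ab; rewrite /star_adj /=.
case: (eqVneq (nat_of_ord a) 0) => a0 b0.
  apply: (key a b) => //; try by move: b0; rewrite a0; case: eqP.
have b0' : nat_of_ord b = 0.
  by move: b0 a0; case: (eqVneq (nat_of_ord a) 0); case: (eqVneq (nat_of_ord b) 0).
by apply: (key b a) => //; rewrite ee setUC.
Qed.

Lemma step_complete (C : {set {set V}}) (c w : V) : adj c w ->
  r <= #|[set u | adj c u & [set c; u] \in C]| -> [set c; w] \in step C.
Proof.
move=> cw; set U := [set u | adj c u & [set c; u] \in C] => rU.
case: (boolP ([set c; w] \in C)) => cwC; first exact: stepI1.
apply: stepI2; first exact: edgeE.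
rewrite /newp.
have wU : w \notin U by rewrite inE negb_and cwC orbT.
have cU : c \notin U by rewrite inE adj_irr.
set s := enum U.
have ss : size s = #|U| by rewrite cardE.
have sU : forall k, k < r -> nth c s k \in U.
  by move=> k kr; rewrite -mem_enum mem_nth // ss; lia.
pose f := [ffun a : 'I_(r.+2) => if nat_of_ord a == 0 then c else if nat_of_ord a == 1 then w
   else nth c s (nat_of_ord a - 2)].
have fU : forall a : 'I_(r.+2), nat_of_ord a != 0 -> nat_of_ord a != 1 -> f a \in U.
  by move=> a a0 a1; rewrite ffunE (negbTE a0) (negbTE a1); apply: sU; have := ltn_ord a; lia.
have cw' : c != w by apply: contraTneq cw => ->; rewrite adj_irr.
have neqU : forall u, u \in U -> (u != c) && (u != w).
  by move=> u uU; apply/andP; split; apply: contraTneq uU => ->.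
apply/existsP; exists f; apply/and3P; split.
- have H : forall a : 'I_(r.+2), (nat_of_ord a = 0 /\ f a = c) \/ (nat_of_ord a = 1 /\ f a = w)
      \/ (1 < nat_of_ord a /\ f a \in U /\ f a = nth c s (nat_of_ord a - 2)).
    move=> a; case: (eqVneq (nat_of_ord a) 0) => a0; first by left; rewrite ffunE a0.
    case: (eqVneq (nat_of_ord a) 1) => a1; first by right; left; rewrite ffunE a1.
    right; right; split; first by move: a0 a1; lia.
    by rewrite fU // ffunE (negbTE a0) (negbTE a1).
  apply/injectiveP => a b fab; apply: val_inj => /=.
  have [[a0 fa]|[[a1 fa]|[a2 [faU fa]]]] := H a;
  have [[b0 fb]|[[b1 fb]|[b2 [fbU fb]]]] := H b; rewrite ?a0 ?a1 ?b0 ?b1 //.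
  + by move: cw'; rewrite -fa -fb fab eqxx.
  + by move: fbU; rewrite -fab fa => /neqU; rewrite eqxx.
  + by move: cw'; rewrite -fa -fb fab eqxx.
  + by move: fbU; rewrite -fab fa => /neqU; rewrite eqxx andbF.
  + by move: faU; rewrite fab fb => /neqU; rewrite eqxx.
  + by move: faU; rewrite fab fb => /neqU; rewrite eqxx andbF.
  + move: fab; rewrite fa fb => /eqP; rewrite nth_uniq ?enum_uniq ?ss;
    try (by move=> /eqP; move: a2 b2; lia); try (by have := ltn_ord a; lia);
    try (by have := ltn_ord b; lia); done.
- apply/forallP => a; apply/forallP => b; apply/implyP.
  have adjf : forall x : 'I_(r.+2), nat_of_ord x != 0 -> adj c (f x).
    move=> x x0; case: (eqVneq (nat_of_ord x) 1) => x1.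
      by rewrite ffunE (negbTE x0) x1.
    by have := fU x x0 x1; rewrite inE => /andP [].
  case/star_cases => [[a0 b0]|[b0 a0]].
    have -> : f a = c by rewrite ffunE a0.
    by apply: adjf.
  have -> : f b = c by rewrite ffunE b0.
  by rewrite adjC; apply: adjf.
- have o1 : 1 < r.+2 by [].
  apply/existsP; exists ord0; apply/existsP; exists (Ordinal o1).
  apply/and3P; split => //.
    by rewrite !ffunE /=.
  apply/forallP => a; apply/forallP => b; apply/implyP.
  have memC : forall x : 'I_(r.+2), nat_of_ord x != 0 ->
      ([set c; f x] == [set c; w]) || ([set c; f x] \in C).
    move=> x x0; case: (eqVneq (nat_of_ord x) 1) => x1.
      by rewrite ffunE (negbTE x0) x1 /= eqxx.
    by have := fU x x0 x1; rewrite inE => /andP [_ ->]; rewrite orbT.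
  case/star_cases => [[a0 b0]|[b0 a0]].
    have -> : f a = c by rewrite ffunE a0.
    by apply: memC.
  have -> : f b = c by rewrite ffunE b0.
  by rewrite setUC; apply: memC.
Qed.

Lemma step_mono (A B : {set {set V}}) : A \subset B -> step A \subset step B.
Proof.
move=> AB; apply/subsetP => e; case/stepP1 => [eA|[eE H]].
  by apply: stepI1; rewrite (subsetP AB).
apply: stepI2 => //; move: H.
move=> /existsP [f /and3P [fi fh /existsP [a /existsP [b /and3P [ab ee fa]]]]].
 apply/existsP; exists f; rewrite fi fh !andTb.
apply/existsP; exists a; apply/existsP; exists b; rewrite ab ee !andTb.
apply/forallP => a'; apply/forallP => b'; apply/implyP => h.
move: fa => /forallP /(_ a') /forallP /(_ b') /implyP /(_ h) /orP [->//|H].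
by rewrite (subsetP AB _ H) orbT.
Qed.

Lemma step_sub (A : {set {set V}}) : A \subset E -> step A \subset E.
Proof.
move=> AE; apply/subsetP => e; case/stepP1 => [eA|[]//].
exact: (subsetP AE).
Qed.

Lemma step_incl (A : {set {set V}}) : A \subset step A.
Proof. by apply/subsetP => e eA; apply: stepI1. Qed.

Lemma iter_sub (A : {set {set V}}) k : A \subset E -> iter k step A \subset E.
Proof. move=> AE; elim: k => [|k IH]; first exact: AE. rewrite iterS; exact: step_sub. Qed.

Lemma iter_mono (A B : {set {set V}}) k : A \subset B -> iter k step A \subset iter k step B.
Proof. move=> AB; elim: k => [|k IH]; first exact: AB. rewrite !iterS; exact: step_mono. Qed.

End Step.

Import GRing.Theory Num.Theory.

Section LB.
Variables n d r : nat.
Local Notation V := {ffun 'I_d -> 'I_n}.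
Local Notation adj := (@hamming_adj n d).
Local Notation step := (bp_step (@hamming_adj n d) (@star_adj r)).
Local Notation E := (edges (@hamming_adj n d)).
Local Notation Al := {ffun 'I_d.+1 -> 'I_r}.
Local Open Scope ring_scope.

Definition lp (i : 'I_d) (s : 'I_n) : rat := ((i * n + s)%N)%:R.

Lemma lp_inj i s j t : lp i s = lp j t -> i = j /\ s = t.
Proof.
move/eqP; rewrite /lp eqr_nat => /eqP H.
have n0 : (0 < n)%N by apply: leq_ltn_trans (ltn_ord s).
have Hi : ((i * n + s) %/ n)%N = i :> nat by rewrite divnMDl // divn_small ?addn0.
have Hj : ((j * n + t) %/ n)%N = j :> nat by rewrite divnMDl // divn_small ?addn0.
have ij : i = j by apply: val_inj; rewrite /= -Hi -Hj H.
split => //; subst j; apply: val_inj => /=; move/eqP: H; rewrite eqn_add2l => /eqP //.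
Qed.

Definition zpt (x : V) (w : rat) (k : 'I_d.+1) : rat :=
  if unlift ord_max k is Some i then lp i (x i) else w.

Definition Pev (h : Al -> rat) (z : 'I_d.+1 -> rat) : rat :=
  \sum_(al : Al) h al * \prod_(k < d.+1) z k ^+ al k.

Definition labx (x y : V) : rat :=
  \sum_(i < d) (if x i != y i then lp i (y i) else 0).

Definition gev h x y := Pev h (zpt x (labx x y)).

Lemma zpt_lift x w i : zpt x w (lift ord_max i) = lp i (x i).
Proof. by rewrite /zpt liftK. Qed.

Lemma zpt_max x w : zpt x w ord_max = w.
Proof. by rewrite /zpt unlift_none. Qed.

Lemma labx_upd (x : V) i s : s != x i -> labx x (upd x i s) = lp i s.
Proof.
move=> sx; rewrite /labx (bigD1 i) //= upd_same eq_sym sx big1 ?addr0 //.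
by move=> j ji; rewrite upd_other // eqxx.
Qed.

Lemma labx_inj (x u v : V) : adj x u -> adj x v -> labx x u = labx x v -> u = v.
Proof.
move=> /adj_updE [i [ui eu]] /adj_updE [j [vj ev]].
rewrite eu ev !labx_upd // => /lp_inj [ij uv]; subst j.
by rewrite eu ev uv.
Qed.

Lemma Pev_ext h z z' : (forall k, z k = z' k) -> Pev h z = Pev h z'.
Proof. by move=> H; apply: eq_bigr => al _; congr (_ * _); apply: eq_bigr => k _; rewrite H. Qed.

Definition hsym (h : Al -> rat) :=
  forall (s : {perm 'I_d.+1}) (al : Al), h [ffun k => al (s k)] = h al.

Lemma Pev_perm h (s : {perm 'I_d.+1}) z : hsym h -> Pev h (fun k => z (s k)) = Pev h z.
Proof.
move=> hs; rewrite /Pev.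
rewrite (reindex_inj (h := fun al : Al => [ffun k => al (s k)])) /=; last first.
  move=> a b /ffunP H; apply/ffunP => k; have := H ((s^-1)%g k).
  by rewrite !ffunE permKV.
apply: eq_bigr => al _; rewrite hs; congr (_ * _).
rewrite [RHS](reindex_inj (@perm_inj _ s)) /=.
by apply: eq_bigr => k _; rewrite ffunE.
Qed.

Lemma gev_sym h (x y : V) : hsym h -> adj x y -> gev h x y = gev h y x.
Proof.
move=> hs xy; have [i [yi ey]] := adj_updE xy.
have ex : x = upd y i (x i).
  apply/ffunP => j; rewrite ffunE; case: eqP => [->//|/eqP ji].
  by rewrite ey upd_other.
have xi : x i != y i by rewrite eq_sym.
rewrite /gev.
have -> : labx x y = lp i (y i) by rewrite {1}ey labx_upd.
have -> : labx y x = lp i (x i) by rewrite {1}ex labx_upd.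
rewrite -(Pev_perm (tperm (lift ord_max i) ord_max) _ hs).
apply: Pev_ext => k.
case: (unliftP ord_max k) => [j ->|->].
  rewrite zpt_lift; case: (eqVneq j i) => [->|ji].
    by rewrite tpermL zpt_max.
  rewrite tpermD ?zpt_lift; last 2 first.
  - by apply: contra ji => /eqP /lift_inj ->.
  - exact: neq_lift.
  by rewrite ey upd_other.
by rewrite zpt_max tpermR zpt_lift.
Qed.

Definition Ccoef h (x : V) (j : 'I_r) : rat :=
  \sum_(al : Al | al ord_max == j) h al * \prod_(k < d) lp k (x k) ^+ al (lift ord_max k).

Lemma Pev_poly h x w : Pev h (zpt x w) = \sum_(j < r) Ccoef h x j * w ^+ j.
Proof.
rewrite /Pev (partition_big (fun al : Al => al ord_max) xpredT) //=.
apply: eq_bigr => j _; rewrite /Ccoef big_distrl /=.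
apply: eq_bigr => al /eqP alj; rewrite big_ord_recr /= zpt_max alj mulrA.
congr (_ * _ * _); apply: eq_bigr => k _.
have -> : widen_ord (leqnSn d) k = lift ord_max k by apply: val_inj; rewrite /= /bump leqNgt ltn_ord.
by rewrite zpt_lift.
Qed.

Definition VM (q : 'I_r -> rat) : 'M[rat]_r := \matrix_(i, t) q t ^+ i.

Lemma VM_unit (q : 'I_r -> rat) : injective q -> VM q \in unitmx.
Proof.
move=> qi.
have -> : VM q = Vandermonde r (\row_t q t) by apply/matrixP => i t; rewrite !mxE.
rewrite unitmxE det_Vandermonde unitfE.
apply/prodf_neq0 => i _; apply/prodf_neq0 => j ij.
by rewrite !mxE subr_eq0; apply/eqP => /qi E; move: ij; rewrite E ltnn.
Qed.

Definition dual q (j t : 'I_r) : rat := invmx (VM q) t j.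

Lemma dualP (q : 'I_r -> rat) : injective q -> forall i j : 'I_r, \sum_t dual q j t * q t ^+ i = (i == j)%:R.
Proof.
move=> qi i j; have := mulmxV (VM_unit qi) => /matrixP /(_ i j).
rewrite !mxE => <-; apply: eq_bigr => t _; by rewrite !mxE mulrC.
Qed.

Lemma vanish_poly (q : 'I_r -> rat) (C : 'I_r -> rat) : injective q ->
  (forall t, \sum_j C j * q t ^+ j = 0) -> forall j, C j = 0.
Proof.
move=> qi H j.
transitivity (\sum_i C i * (i == j)%:R).
  rewrite (bigD1 j) //= eqxx mulr1 big1 ?addr0 // => i /negbTE ->.
  by rewrite mulr0.
under eq_bigr => i _ do rewrite -(dualP qi i j) big_distrr.
rewrite exchange_big /= big1 // => t _.
transitivity (dual q j t * \sum_i C i * q t ^+ i); last by rewrite H mulr0.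
rewrite big_distrr; apply: eq_bigr => i _; by rewrite mulrCA.
Qed.

Lemma local_zero h (x : V) (U : {set V}) : (r <= #|U|)%N ->
  (forall u, u \in U -> adj x u /\ gev h x u = 0) -> forall w, Pev h (zpt x w) = 0.
Proof.
move=> rU HU w.
set s := enum U.
have ss : size s = #|U| by rewrite cardE.
have sU : forall t : 'I_r, nth x s t \in U.
  by move=> t; rewrite -mem_enum mem_nth // ss; apply: leq_trans rU.
pose q (t : 'I_r) := labx x (nth x s t).
have qi : injective q.
  move=> t1 t2 /labx_inj eq12.
  have := eq12 (proj1 (HU _ (sU t1))) (proj1 (HU _ (sU t2))).
  have l1 : (t1 < size s)%N by rewrite ss; exact: leq_trans (ltn_ord t1) rU.
  have l2 : (t2 < size s)%N by rewrite ss; exact: leq_trans (ltn_ord t2) rU.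
  by move/eqP; rewrite nth_uniq ?enum_uniq // => /eqP/val_inj.
have C0 := vanish_poly (C := Ccoef h x) qi.
rewrite Pev_poly big1 // => j _; rewrite C0 ?mul0r // => t.
by rewrite -Pev_poly; have [_ <-] := HU _ (sU t).
Qed.

Definition Zp h (e : {set V}) := forall x y, adj x y -> e = [set x; y] -> gev h x y = 0.

Lemma Z_step h (A : {set {set V}}) e : hsym h -> (forall e', e' \in A -> Zp h e') ->
  e \in step A -> Zp h e.
Proof.
move=> hs HA; case/step_sound => [eA|[c [w [cw ecw rS]]]]; first exact: HA.
have gcw : gev h c w = 0.
  apply: (local_zero rS) => u; rewrite inE => /and3P [cu _ cuA].
  by split => //; apply: (HA _ cuA).
move=> x y xy exy; rewrite ecw in exy.
case: (set2_eq exy) => [[<- <-]//|[ex ey]].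
by rewrite gev_sym // -ex -ey.
Qed.

Lemma Z_iter h (A : {set {set V}}) : hsym h -> (forall e, e \in A -> Zp h e) ->
  forall k e, e \in iter k step A -> Zp h e.
Proof.
move=> hs HA; elim => [|k IH] e; first exact: HA.
rewrite iterS; apply: Z_step => //.
Qed.

Lemma all_zero h : (r <= n)%N -> (forall x w, Pev h (zpt x w) = 0) -> forall al, h al = 0.
Proof.
move=> rn H be.
pose q (k : 'I_d.+1) (t : 'I_r) : rat :=
  if unlift ord_max k is Some i then lp i (widen_ord rn t) else (t : nat)%:R.
have qi : forall k, injective (q k).
  move=> k t1 t2; rewrite /q; case: (unlift ord_max k) => [i|].
    by move/lp_inj => [_ /(congr1 val) /= /val_inj].
  by move/eqP; rewrite eqr_nat => /eqP /val_inj.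
have Hs : forall s : Al, \sum_(al : Al) h al * \prod_(k < d.+1) q k (s k) ^+ al k = 0.
  move=> s; pose xs : V := [ffun i => widen_ord rn (s (lift ord_max i))].
  rewrite -[RHS](H xs ((s ord_max : nat)%:R)); apply: Pev_ext => k.
  case: (unliftP ord_max k) => [j ->|->].
    by rewrite zpt_lift /q liftK ffunE.
  by rewrite zpt_max /q unlift_none.
have P1 : forall al : Al, \prod_(k < d.+1) ((al k == be k)%:R : rat) = (al == be)%:R.
  move=> al; case: (eqVneq al be) => [->|ne].
    by rewrite big1 // => k _; rewrite eqxx.
  have [k hk] : exists k, al k != be k.
    apply/existsP; apply: contraR ne => /existsPn Hn; rewrite ?negbK.
    by apply/eqP/ffunP => k; apply/eqP; move: (Hn k); rewrite negbK.
  by rewrite (bigD1 k) //= (negbTE hk) mul0r.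
transitivity (\sum_(s : Al) (\prod_(k < d.+1) dual (q k) (be k) (s k)) *
   \sum_(al : Al) h al * \prod_(k < d.+1) q k (s k) ^+ al k); last first.
  by rewrite big1 // => s _; rewrite Hs mulr0.
symmetry.
under eq_bigr => s _ do rewrite big_distrr.
rewrite exchange_big /=.
under eq_bigr => al _ do (under eq_bigr => s _ do rewrite mulrCA -big_split /=).
under eq_bigr => al _ do rewrite -big_distrr /=.
under eq_bigr => al _ do rewrite -(bigA_distr_bigA (fun k t => dual (q k) (be k) t * q k t ^+ al k)) /=.
under eq_bigr => al _ do (under eq_bigr => k _ do rewrite (dualP (qi k))).
under eq_bigr => al _ do rewrite P1.
rewrite (bigD1 be) //= eqxx mulr1 big1 ?addr0 // => al /negbTE ->.
by rewrite mulr0.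
Qed.

Lemma h_zero_of_edges h : (0 < d)%N -> (r < n)%N ->
  (forall x y, adj x y -> gev h x y = 0) -> forall al, h al = 0.
Proof.
move=> d0 rn H; apply: (all_zero (ltnW rn)) => x w.
pose i0 : 'I_d := Ordinal d0.
apply: (local_zero (U := [set upd x i0 s | s in [set s | s != x i0]])).
  rewrite card_in_imset; last first.
    by move=> s t; rewrite !inE => si ti /(upd_inj si ti) [].
  have -> : [set s | s != x i0] = [set~ x i0] by apply/setP => s; rewrite !inE.
  by rewrite cardsC1 card_ord; move: rn; case: n.
move=> u /imsetP [s]; rewrite inE => si ->; split; first by rewrite adj_upd.
by apply: H; rewrite adj_upd.
Qed.

Lemma gev_lin m (c : 'I_m -> rat) (hs : 'I_m -> Al -> rat) x y :
  gev (fun al => \sum_i c i * hs i al) x y = \sum_i c i * gev (hs i) x y.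
Proof.
rewrite /gev /Pev; under eq_bigr => al _ do rewrite big_distrl.
rewrite exchange_big; apply: eq_bigr => i _; rewrite big_distrr.
by apply: eq_bigr => al _ /=; rewrite mulrA.
Qed.

Definition Lam := [set t : (d.+1).-tuple 'I_r | sorted leq (map val t)].
Definition hb (lam : (d.+1).-tuple 'I_r) (al : Al) : rat := (perm_eq (codom al) lam)%:R.

Lemma count_codom (T : finType) (U : eqType) (f : T -> U) (P : pred U) :
  count P (codom f) = #|[pred k | P (f k)]|.
Proof. by rewrite codomE count_map cardE size_filter enumT. Qed.

Lemma codom_perm (al : Al) (s : {perm 'I_d.+1}) :
  perm_eq (codom [ffun k => al (s k)]) (codom al).
Proof.
apply/seq.permP => P; rewrite !count_codom.
have -> : #|[pred k | P (al k)]| = #|[set k | P (al k)]| by apply: eq_card => k; rewrite inE.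
rewrite -(card_preimset _ (@perm_inj _ s)).
by apply: eq_card => k; rewrite !inE ffunE.
Qed.

Lemma hb_sym lam : hsym (hb lam).
Proof. by move=> s al; rewrite /hb (permPl (codom_perm al s)). Qed.

Lemma hb_eval lam mu : lam \in Lam -> mu \in Lam ->
  hb mu [ffun k => tnth lam k] = (lam == mu)%:R.
Proof.
move=> lL mL; rewrite /hb.
have -> : codom [ffun k => tnth lam k] = lam.
  by rewrite codomE -[RHS]map_tnth_enum; apply: eq_map => k; rewrite ffunE.
suff -> : perm_eq lam mu = (lam == mu) by [].
apply/idP/idP => [pe|/eqP ->]; last exact: perm_refl.
apply/eqP/val_inj/(inj_map val_inj).
move: lL mL; rewrite !inE => lL mL.
exact: (sorted_eq leq_trans anti_leq lL mL (perm_map _ pe)).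
Qed.

Definition rep (x0 : V) (e : {set V}) : V * V :=
  odflt (x0, x0) [pick p : V * V | (e == [set p.1; p.2]) && adj p.1 p.2].

Lemma repP x0 e : e \in E -> e = [set (rep x0 e).1; (rep x0 e).2] /\ adj (rep x0 e).1 (rep x0 e).2.
Proof.
rewrite /rep; case: pickP => [p /andP [/eqP -> ->]//| none].
move/edgeP => [x [y [xy exy]]]; have := none (x, y).
by rewrite /= exy eqxx xy.
Qed.

Lemma lower_bound (x0 : V) (E0 : {set {set V}}) : (0 < d)%N -> (r < n)%N ->
  percolating adj (@star_adj r) E0 -> (#|Lam| <= #|E0|)%N.
Proof.
move=> d0 rn [E0E [k Hk]].
pose M : 'M[rat]_(#|Lam|, #|E0|) := \matrix_(i, j)
  gev (hb (enum_val i)) (rep x0 (enum_val j)).1 (rep x0 (enum_val j)).2.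
have inj : forall v : 'rV_#|Lam|, v *m M = 0 -> v = 0.
  move=> v vM.
  pose hv al := \sum_i v 0 i * hb (enum_val i) al.
  have hvs : hsym hv by move=> s al; rewrite /hv; apply: eq_bigr => i _; rewrite hb_sym.
  have Z0 : forall e, e \in E0 -> Zp hv e.
    move=> e eE0 x y xy exy.
    pose j : 'I_#|E0| := enum_rank_in eE0 e.
    have ej : enum_val j = e by rewrite enum_rankK_in.
    have [erep adjrep] := repP x0 (subsetP E0E _ eE0).
    have g0 : gev hv (rep x0 e).1 (rep x0 e).2 = 0.
      have := congr1 (fun A : 'rV[rat]_#|E0| => A 0 j) vM; rewrite !mxE => <-.
      rewrite /hv gev_lin; apply: eq_bigr => i _; by rewrite mxE ej.
    have erep' : [set x; y] = [set (rep x0 e).1; (rep x0 e).2] by rewrite -exy.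
    case: (set2_eq erep') => [[-> ->]//|[-> ->]].
    by rewrite gev_sym // adjC.
  have ZE : forall e, e \in iter k step E0 -> Zp hv e by move=> e; apply: Z_iter.
  have gall : forall x y, adj x y -> gev hv x y = 0.
    move=> x y xy; apply: (ZE [set x; y]) => //.
    by rewrite Hk; exact: edgeE.
  have hv0 := h_zero_of_edges d0 rn gall.
  apply/rowP => i; rewrite mxE.
  have := hv0 [ffun kk => tnth (enum_val i) kk].
  rewrite /hv (bigD1 i) //= hb_eval ?enum_valP // eqxx mulr1 big1 ?addr0 //.
  move=> i' i'i; rewrite hb_eval ?enum_valP //.
  by rewrite (inj_eq enum_val_inj) eq_sym (negbTE i'i) mulr0.
have : kermx M == 0.
  apply/eqP/row_matrixP => i; rewrite row0; apply: inj.
  by rewrite -row_mul mulmx_ker row0.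
rewrite kermx_eq0 /row_free => /eqP <-; exact: rank_leq_col.
Qed.

End LB.

Lemma pad_set (T : finType) (A B : {set T}) m :
  A \subset B -> #|A| <= m -> m <= #|B| -> exists C : {set T}, [/\ A \subset C, C \subset B & #|C| = m].
Proof.
move=> AB; move Hk: (m - #|A|) => k; elim: k A AB Hk => [|k IH] A AB Hk Am mB.
  by exists A; split => //; apply/eqP; rewrite eqn_leq Am /=; lia.
have : ~~ (B \subset A).
  apply/negP => BA; have := subset_leq_card BA; lia.
case/subsetPn => b bB bA.
have [C [AC CB cC]] : exists C : {set T}, [/\ b |: A \subset C, C \subset B & #|C| = m].
  apply: IH.
  - by rewrite subUset sub1set bB AB.
  - by rewrite cardsU1 bA; lia.
  - by rewrite cardsU1 bA; lia.
  - exact: mB.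
exists C; split => //; apply: subset_trans AC; exact: subsetUr.
Qed.

Section Fix.
Variables n d r : nat.
Local Notation V := {ffun 'I_d -> 'I_n}.
Local Notation step := (bp_step (@hamming_adj n d) (@star_adj r)).
Local Notation E := (edges (@hamming_adj n d)).

Lemma fix_exists (E0 : {set {set V}}) : E0 \subset E ->
  exists j, step (iter j step E0) \subset iter j step E0.
Proof.
move=> E0E.
have H : forall j, (exists i, step (iter i step E0) \subset iter i step E0) \/ j <= #|iter j step E0|.
  elim => [|j [L|IH]]; [by right| by left|].
  move: (orbN (step (iter j step E0) \subset iter j step E0)) => /orP [S|NS].
    by left; exists j.
  right; rewrite iterS.
  have : iter j step E0 \proper step (iter j step E0) by rewrite properE step_incl NS.
  move/proper_card; lia.
case: (H (#|E|.+1)) => // big.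
have := subset_leq_card (@iter_sub n d r E0 (#|E|.+1) E0E); lia.
Qed.

End Fix.

Section Iter.
Variables n d r : nat.
Local Notation V := {ffun 'I_d -> 'I_n}.
Local Notation step := (bp_step (@hamming_adj n d) (@star_adj r)).
Lemma iter_incl (A : {set {set V}}) k : A \subset iter k step A.
Proof.
elim: k => [|k IH]; first exact: subxx.
rewrite iterS; apply: subset_trans IH _; exact: step_incl.
Qed.
End Iter.

Section UB.
Variables n' d' r' : nat.
Hypothesis rn : r'.+1 < n'.+1.
Local Notation n := n'.+1.
Local Notation d := d'.+1.
Local Notation r := r'.+1.
Local Notation V := {ffun 'I_d -> 'I_n}.
Local Notation adj := (@hamming_adj n d).
Local Notation step := (bp_step (@hamming_adj n d) (@star_adj r)).
Local Notation E := (edges (@hamming_adj n d)).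
Local Notation Tup := ((d'.+2).-tuple 'I_r).

Definition T (x : V) : nat := \sum_(j < d') x (lift ord0 j).
Definition cn (c : Tup) (j : nat) : nat := nth 0 (map (@nat_of_ord _) c) j.
Definition Xc (c : Tup) : V :=
  [ffun k : 'I_d => inord (if (k : nat) == 0 then cn c 0 else cn c k.+1)].
Definition Yc (c : Tup) : V :=
  [ffun k : 'I_d => inord (if (k : nat) == 0 then cn c 0 + cn c 1 + 1 else cn c k.+1)].
Definition Lp := [set c : Tup | \sum_(i <- c) i <= r'].
Definition E0 := [set [set Xc c; Yc c] | c in Lp].

Lemma cn01 c : c \in Lp -> cn c 0 + cn c 1 <= r'.
Proof.
rewrite inE /cn; case: c => s sz /=; move: sz.
case: s => [|a [|b t]] //= _; rewrite !big_cons; lia.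
Qed.

Lemma E0_sub : E0 \subset E.
Proof.
apply/subsetP => e /imsetP [c cL ->]; apply: edgeE; apply/adjP; exists ord0; split.
  have h := cn01 cL.
  rewrite !ffunE /=; apply/eqP => /(congr1 val); rewrite /= !inordK; lia.
move=> j j0; rewrite !ffunE.
have -> : ((j : nat) == 0) = false by apply/negbTE; apply: contra j0 => /eqP h; apply/eqP/val_inj.
by [].
Qed.

Lemma T_upd0 (x : V) (s : 'I_n) : T (upd x ord0 s) = T x.
Proof. by apply: eq_bigr => j _; rewrite upd_other // eq_sym neq_lift. Qed.

Lemma T_upd (x : V) (j : 'I_d') (s : 'I_n) : s < x (lift ord0 j) -> T (upd x (lift ord0 j) s) < T x.
Proof.
move=> sx; rewrite /T (bigD1 j) //= [X in _ < X](bigD1 j) //= upd_same.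
have -> : \sum_(k < d' | k != j) upd x (lift ord0 j) s (lift ord0 k) =
    \sum_(k < d' | k != j) x (lift ord0 k).
  by apply: eq_bigr => k kj; rewrite upd_other // (inj_eq (@lift_inj _ ord0)).
by rewrite ltn_add2r.
Qed.

Lemma xT (x : V) (j : 'I_d') : x (lift ord0 j) <= T x.
Proof. by rewrite /T (bigD1 j) //= leq_addr. Qed.

Lemma pre_E0 (x : V) (s : 'I_n) : x ord0 < s -> s + T x <= r -> [set x; upd x ord0 s] \in E0.
Proof.
move=> x0s sT.
pose F (k : 'I_(d'.+2)) : nat := if (k : nat) == 0 then (x ord0 : nat)
  else if (k : nat) == 1 then s - x ord0 - 1 else (x (inord k.-1) : nat).
have Fle : forall k, F k <= r'.
  move=> k; rewrite /F; case: ifP => _; first lia.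
  case: ifP => _; first lia.
  case: (unliftP ord0 (inord k.-1 : 'I_d)) => [j ->|->]; last lia.
  have := xT x j; lia.
pose c : Tup := [tuple (inord (F k) : 'I_r) | k < d'.+2].
have Fv : forall k, ((inord (F k) : 'I_r) : nat) = F k.
  by move=> k; rewrite inordK // ltnS Fle.
have cnE : forall j (jd : j < d'.+2), cn c j = F (Ordinal jd).
  move=> j jd; rewrite /cn (nth_map ord0) ?size_tuple //.
  have -> : nth ord0 c j = tnth c (Ordinal jd) by rewrite (tnth_nth ord0).
  by rewrite tnth_mktuple Fv.
have d2 : 0 < d'.+2 by [].
have d1 : 1 < d'.+2 by [].
have Xx : Xc c = x.
  apply/ffunP => k; rewrite ffunE; case: (eqVneq (k : nat) 0) => k0.
    rewrite (cnE 0 d2) /F /= inord_val.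
    by congr (x _); apply: val_inj; rewrite /= k0.
  have kd : k.+1 < d'.+2 by have := ltn_ord k; lia.
  rewrite (cnE _ kd) /F /=.
  have -> : (k.+1 == 1) = false by rewrite eqSS (negbTE k0).
  by rewrite !inord_val.
have Yx : Yc c = upd x ord0 s.
  apply/ffunP => k; rewrite !ffunE; case: (eqVneq (k : nat) 0) => k0.
    have -> : k = ord0 by apply: val_inj.
    rewrite eqxx (cnE 0 d2) (cnE 1 d1) /F /=.
    have -> : x ord0 + (s - x ord0 - 1) + 1 = s by lia.
    by rewrite inord_val.
  have kd : k.+1 < d'.+2 by have := ltn_ord k; lia.
  have -> : (k == ord0) = false by apply/negbTE; apply: contra k0 => /eqP ->.
  rewrite (cnE _ kd) /F /=.
  have -> : (k.+1 == 1) = false by rewrite eqSS (negbTE k0).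
  by rewrite !inord_val.
have cL : c \in Lp.
  rewrite inE big_tuple.
  under eq_bigr => i _ do rewrite tnth_mktuple Fv.
  rewrite big_ord_recl big_ord_recl /F /=.
  have IL : forall j : 'I_d', (inord (0 + bump 0 j) : 'I_d) = lift ord0 j.
    by move=> j; apply: val_inj; rewrite /= inordK //; have := ltn_ord j; rewrite /bump; lia.
  under eq_bigr => j _ do rewrite IL.
  rewrite -/(T x); lia.
by apply/imsetP; exists c => //; rewrite Xx Yx.
Qed.

Lemma card_lt (m : nat) : m <= n -> #|[set s : 'I_n | s < m]| = m.
Proof.
move=> mn.
have -> : [set s : 'I_n | s < m] = [set widen_ord mn s | s : 'I_m].
  apply/setP => s; rewrite inE; apply/idP/imsetP => [sm|[t _ ->]]; last by case: t.
  by exists (Ordinal sm) => //; apply: val_inj.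
rewrite card_imset ?card_ord // => a b /(congr1 val) /= ab; exact: val_inj.
Qed.

Lemma card_le_neq (M : nat) (a : 'I_n) : M < n -> M <= #|[set s : 'I_n | (s <= M) && (s != a)]|.
Proof.
move=> Mn.
have -> : [set s : 'I_n | (s <= M) && (s != a)] = [set s : 'I_n | s < M.+1] :\ a.
  by apply/setP => s; rewrite !inE ltnS andbC.
have := cardsD1 a [set s : 'I_n | s < M.+1]; rewrite card_lt //.
by case: (a \in _) => /=; lia.
Qed.

Definition Dp (x : V) (i : 'I_d) (s : 'I_n) : bool :=
  if i == ord0 then (s <= r - T x) && (s != x ord0) else s < x i.

Lemma card_Dom (x : V) : #|[set p : 'I_d * 'I_n | Dp x p.1 p.2]| = \sum_i #|[set s | Dp x i s]|.
Proof.
rewrite -sum1_card (partition_big (fun p : 'I_d * 'I_n => p.1) xpredT) //=.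
apply: eq_bigr => i _.
have pinj : injective (fun s : 'I_n => (i, s)) by move=> a b [].
transitivity #|[set p : 'I_d * 'I_n | Dp x p.1 p.2 && (p.1 == i)]|.
  by rewrite -sum1dep_card; apply: eq_bigl => p; rewrite !inE.
rewrite -(card_imset _ pinj); apply: eq_card => [[j t]]; rewrite !inE /=.
apply/andP/imsetP => [[D /eqP ji]|[u]]; first by subst j; exists t; rewrite ?inE.
by rewrite inE => D [-> ->]; rewrite eqxx.
Qed.

Lemma Dom_ge (x : V) : r <= #|[set p : 'I_d * 'I_n | Dp x p.1 p.2]|.
Proof.
rewrite card_Dom big_ord_recl.
have -> : \sum_(j < d') #|[set s | Dp x (lift ord0 j) s]| = T x.
  apply: eq_bigr => j _.
  have -> : [set s | Dp x (lift ord0 j) s] = [set s : 'I_n | s < x (lift ord0 j)].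
    by apply/setP => s; rewrite !inE /Dp eq_sym (negbTE (neq_lift _ _)).
  by rewrite card_lt // ltnW.
have -> : [set s | Dp x ord0 s] = [set s : 'I_n | (s <= r - T x) && (s != x ord0)].
  by apply/setP => s; rewrite !inE /Dp eqxx.
have := @card_le_neq (r - T x) (x ord0); lia.
Qed.

Section Sat.
Variable C : {set {set V}}.
Hypothesis Ccl : step C \subset C.
Hypothesis E0C : E0 \subset C.

Definition sat (x : V) := forall y, adj x y -> [set x; y] \in C.

Lemma sat_of_card x : r <= #|[set u | adj x u & [set x; u] \in C]| -> sat x.
Proof. by move=> H y xy; apply: (subsetP Ccl); exact: step_complete. Qed.

Definition mu (x : V) : nat := (T x).*2 + (r - T x < x ord0).

Lemma sat_all x : sat x.
Proof.
suff H : forall N x, mu x < N -> sat x by apply: (H (mu x).+1).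
elim => // N IH {}x mx; apply: sat_of_card.
apply: leq_trans (Dom_ge x) _.
rewrite -(card_in_imset (f := fun p : 'I_d * 'I_n => upd x p.1 p.2)); last first.
  move=> [i s] [j t]; rewrite !inE /Dp /= => Di Dj /= eq.
  have si : s != x i.
    by move: Di; case: ifP => [/eqP -> /andP [] //|_]; apply: contraTneq => ->; rewrite ltnn.
  have tj : t != x j.
    by move: Dj; case: ifP => [/eqP -> /andP [] //|_]; apply: contraTneq => ->; rewrite ltnn.
  by case: (upd_inj si tj eq) => -> ->.
apply: subset_leq_card; apply/subsetP => u /imsetP [[i s]]; rewrite inE /Dp /= => Dis ->.
have sxi : s != x i.
  by move: Dis; case: ifP => [/eqP -> /andP [] //|_]; apply: contraTneq => ->; rewrite ltnn.
rewrite inE adj_upd sxi /=.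
have satC : forall y, mu y < mu x -> adj x y -> [set x; y] \in C.
  move=> y my xy; rewrite setUC; apply: (IH y); first lia.
  by rewrite adjC.
case: (unliftP ord0 i) => [j ej|e0]; subst i.
  move: Dis; rewrite eq_sym (negbTE (neq_lift _ _)) => sx.
  apply: satC; last by rewrite adj_upd.
  have h1 := T_upd sx; rewrite /mu -!muln2.
  have b1 := leq_b1 (r - T (upd x (lift ord0 j) s) < upd x (lift ord0 j) s ord0).
  lia.
move: Dis; rewrite eqxx => /andP [sT _].
have sne : (s : nat) != x ord0 by apply: contra sxi => /eqP /val_inj ->.
case: (leqP (x ord0) (r - T x)) => h.
  case: (ltngtP (x ord0) s) => xs; last by rewrite xs eqxx in sne.
    apply: (subsetP E0C); apply: pre_E0 => //.
    move: sne h sT xs; lia.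
  set y := upd x ord0 s.
  have : [set y; upd y ord0 (x ord0)] \in E0.
    apply: pre_E0; first by rewrite /y upd_same.
    rewrite T_upd0; move: sne h sT xs; lia.
  rewrite /y upd_upd upd_id setUC; exact: (subsetP E0C).
apply: satC; last by rewrite adj_upd.
rewrite /mu T_upd0 upd_same.
have -> : (r - T x < s) = false by apply/negbTE; rewrite -leqNgt.
rewrite h; lia.
Qed.

End Sat.

Lemma E0_perc : percolating adj (@star_adj r) E0.
Proof.
split; first exact: E0_sub.
have [j Hj] := @fix_exists _ _ r _ E0_sub; exists j.
apply/eqP; rewrite eqEsubset (@iter_sub _ _ r E0 j E0_sub) /=.
apply/subsetP => e /edgeP [x [y [xy ->]]].
by apply: (sat_all Hj) => //; apply: iter_incl.
Qed.

Lemma E0_card : #|E0| <= 'C(d'.+2 + r', d'.+2).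
Proof. by rewrite -card_partial_ord_partitions; apply: leq_imset_card. Qed.

End UB.

Theorem theorem3p6 (n r d : nat) :
  0 < n -> 0 < r -> 0 < d -> r + 1 <= n ->
  is_me (@hamming_adj n d) r 'C(d + r, d + 1).
Proof.
case: n => [//|n']; case: r => [//|r']; case: d => [//|d'] _ _ _ rn.
have rn' : r'.+1 < n'.+1 by rewrite addn1 in rn.
have -> : 'C(d'.+1 + r'.+1, d'.+1 + 1) = 'C(d'.+2 + r', d'.+2).
  by congr binomial; lia.
have LamC : #|Lam d'.+1 r'.+1| = 'C(d'.+2 + r', d'.+2) by rewrite card_sorted_tuples.
have LB : forall E1, percolating (@hamming_adj n'.+1 d'.+1) (@star_adj r'.+1) E1 ->
    'C(d'.+2 + r', d'.+2) <= #|E1|.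
  move=> E1 P1; rewrite -LamC.
  exact: (@lower_bound n'.+1 d'.+1 r'.+1 [ffun => ord0] E1 (ltn0Sn d') rn' P1).
split; last exact: LB.
have P := E0_perc d' rn'.
have mE : 'C(d'.+2 + r', d'.+2) <= #|edges (@hamming_adj n'.+1 d'.+1)|.
  apply: LB; split; first exact: subxx.
  by exists 0.
have [C1 [E0C1 C1E cC1]] := pad_set (E0_sub d' rn') (E0_card n' d' r') mE.
exists C1; split => //; split => //.
case: P => _ [k Hk]; exists k.
apply/eqP; rewrite eqEsubset (@iter_sub _ _ r'.+1 C1 k C1E) /=.
apply: subset_trans (@iter_mono _ _ r'.+1 _ _ k E0C1).
by rewrite Hk.
Qed.
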